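(* For $n\ge 1$ and all $k\ge 0$, $$P(n+1,k)=(n+1-k)S(n,k),$$ equivalently $P_{n+1}(x)=(n+1)S_n(x)-xS_n'(x)$. Furthermore, for $n\ge1$ and $0\le k\le\lfloor n/2\rfloor$, $$P(n+1,k)=\frac{(k+1)(n-k+1)}{n-k}P(n,k)+(n-2k+1)P(n,k-1).$$ In particular, $P(n,0)=n$ and $P(n,1)=(n-1)(2^{n-1}-n)$ for $n\ge 1$.
   Context: For a permutation $\pi$ of $[n]=\{1,\dots,n\}$, ${\rm des}(\pi)=\#\{i\in[n-1]:\pi(i)>\pi(i+1)\}$. A double descent is an index $i\in[n-2]$ with $\pi(i)>\pi(i+1)>\pi(i+2)$; $\pi$ is simsun if for every $k\in[n]$ the subword of $\pi$ consisting of the letters in $[k]$ (in order of appearance) has no double descents. Let $\mathcal{RS}_n$ be the set of simsun permutations of $[n]$, $S(n,k)=\#\{\pi\in\mathcal{RS}_n:{\rm des}(\pi)=k\}$, $S_n(x)=\sum_kS(n,k)x^k$. An interior peak of $\pi$ is an index $i\in\{2,\dots,n-1\}$ with $\pi(i-1)<\pi(i)>\pi(i+1)$; ${\rm pk}(\pi)$ is their number. Let $P(n,k)=\#\{\pi\in\mathcal{RS}_n:{\rm pk}(\pi)=k\}$ (with $P(n,-1)=0$) and $P_n(x)=\sum_kP(n,k)x^k$. *)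

(* Defs.v *)
From mathcomp Require Import all_boot all_order all_algebra all_fingroup.
Set Implicit Arguments. Unset Strict Implicit. Unset Printing Implicit Defensive.
Import GRing.Theory Num.Theory.

(* A permutation pi of [n] is represented by p : {perm 'I_n}; its one-line
   word is [p 0; p 1; ...; p (n-1)] with values in {0,...,n-1}, i.e. the
   letter j+1 of [n] is encoded as j.  Order relations are unaffected. *)
Definition word n (p : {perm 'I_n}) : seq nat := [seq val (p i) | i <- enum 'I_n].

Definition des_seq (w : seq nat) : nat :=
  \sum_(0 <= i < (size w).-1) (nth 0 w i > nth 0 w i.+1).

Definition has_ddes (w : seq nat) : bool :=
  [exists i : 'I_(size w),
     (i.+2 < size w) && (nth 0 w i > nth 0 w i.+1) && (nth 0 w i.+1 > nth 0 w i.+2)].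

Definition pk_seq (w : seq nat) : nat :=
  \sum_(1 <= i < (size w).-1) ((nth 0 w i.-1 < nth 0 w i) && (nth 0 w i > nth 0 w i.+1)).

(* simsun: for every k in [n], the subword of letters in [k] (encoded values < k)
   has no double descent *)
Definition simsun n (p : {perm 'I_n}) : bool :=
  [forall k : 'I_n.+1, ~~ has_ddes [seq x <- word p | x < k]].

Definition des n (p : {perm 'I_n}) : nat := des_seq (word p).
Definition pk n (p : {perm 'I_n}) : nat := pk_seq (word p).

Definition Snk (n k : nat) : nat := #|[set p : {perm 'I_n} | simsun p && (des p == k)]|.
Definition Pnk (n k : nat) : nat := #|[set p : {perm 'I_n} | simsun p && (pk p == k)]|.

Definition Pprev (n k : nat) : nat := if k is k'.+1 then Pnk n k' else 0.

(* Generating polynomials S_n(x), P_n(x) over int; des <= n-1, pk <= n so the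
   truncations below lose no terms. *)
Definition Spoly (n : nat) : {poly int} := \poly_(k < n.+1) (Snk n k)%:R%R.
Definition Ppoly (n : nat) : {poly int} := \poly_(k < n.+1) (Pnk n k)%:R%R.

(* Main.v *)
Require Import Defs.
From mathcomp Require Import all_boot all_order all_algebra all_fingroup.
From mathcomp Require Import zify.
Import GRing.Theory Num.Theory.
Set Implicit Arguments. Unset Strict Implicit. Unset Printing Implicit Defensive.

Fixpoint desr (w : seq nat) : nat :=
  match w with x :: ((y :: _) as s) => (y < x) + desr s | _ => 0 end.
Fixpoint ddr (w : seq nat) : bool :=
  match w with x :: ((y :: z :: _) as s) => ((y < x) && (z < y)) || ddr s | _ => false end.
Fixpoint pkr (w : seq nat) : nat :=
  match w with x :: ((y :: z :: _) as s) => ((x < y) && (z < y)) + pkr s | _ => 0 end.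
Definition sd (w : seq nat) : bool :=
  match w with x :: y :: _ => y < x | _ => false end.

Lemma des_seqE w : des_seq w = desr w.
Proof.
rewrite /des_seq; elim: w => [|x s IH]; first by rewrite big_geq.
case: s IH => [|y s] IH /=; first by rewrite big_geq.
rewrite big_nat_recl //; exact: (congr1 (addn _) IH).
Qed.

Lemma pk_seqE w : pk_seq w = pkr w.
Proof.
rewrite /pk_seq; elim: w => [|x s IH]; first by rewrite big_geq.
case: s IH => [|y s] IH; first by rewrite big_geq.
case: s IH => [|z s] IH; first by rewrite big_geq.
transitivity (((x < y) && (z < y)) + pk_seq [:: y, z & s]); last by rewrite /pk_seq IH.
rewrite /= big_nat_recl //; congr (_ + _).
apply: eq_big_nat => i /andP[hi _]; case: i hi => //.
Qed.

Definition Qd (w : seq nat) (i : nat) : bool :=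
  (i.+2 < size w) && (nth 0 w i.+1 < nth 0 w i) && (nth 0 w i.+2 < nth 0 w i.+1).

Lemma ddrP w : reflect (exists i, Qd w i) (ddr w).
Proof.
elim: w => [|x s IH]; first by apply: ReflectF => -[i].
case: s IH => [|y s] IH; first by apply: ReflectF => -[i].
case: s IH => [|z s] IH; first by apply: ReflectF => -[[|[|i]]].
rewrite /=; apply: (iffP orP).
- case=> [h|/IH [i hi]]; first by exists 0; rewrite /Qd /= h.
  by exists i.+1.
- case=> [[|i]] h; first by left; case/andP: h => /andP[_ ->] ->.
  by right; apply/IH; exists i.
Qed.

Lemma has_ddesE w : has_ddes w = ddr w.
Proof.
rewrite /has_ddes; apply/idP/ddrP.
- by case/existsP=> i hi; exists i.
- case=> i hi; apply/existsP.
  have hs : i < size w by move: hi; rewrite /Qd => /andP[/andP[h _] _]; apply: ltn_trans h.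
  by exists (Ordinal hs).
Qed.

Definition simw n (w : seq nat) : bool :=
  all (fun k => ~~ ddr [seq x <- w | x < k]) (iota 0 n.+1).

Lemma simsunE n (p : {perm 'I_n}) : simsun p = simw n (word p).
Proof.
rewrite /simsun /simw; apply/forallP/allP => [h k | h k].
- rewrite mem_iota add0n => hk; move: (h (Ordinal hk)); by rewrite has_ddesE.
- by rewrite has_ddesE; apply: h; rewrite mem_iota add0n ltn_ord.
Qed.

Lemma word_perm n (p : {perm 'I_n}) : perm_eq (word p) (iota 0 n).
Proof.
have -> : word p = map val (map p (enum 'I_n)) by rewrite -map_comp.
rewrite -val_enum_ord; apply: perm_map.
apply: uniq_perm; first by rewrite map_inj_uniq ?enum_uniq //; apply: perm_inj.
  exact: enum_uniq.
move=> i; rewrite mem_enum inE; apply/mapP; exists ((p^-1)%g i); first by rewrite mem_enum.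
by rewrite permKV.
Qed.

Lemma word_inj n : injective (@word n).
Proof.
move=> p q /eq_in_map h; apply/permP => i; apply: val_inj.
by apply: h; rewrite mem_enum.
Qed.

Lemma card_word n (Q : pred (seq nat)) :
  #|[set p : {perm 'I_n} | Q (word p)]| = \sum_(w <- permutations (iota 0 n)) Q w.
Proof.
rewrite cardsE -sum1_card big_mkcond /=.
rewrite -big_enum /=.
have -> : \sum_(i <- enum {perm 'I_n}) (if Q (word i) then 1 else 0)
   = \sum_(w <- [seq word i | i <- enum {perm 'I_n}]) Q w.
  by rewrite big_map; apply: eq_bigr => i _; case: (Q _).
apply: perm_big; apply: uniq_perm.
- by rewrite map_inj_uniq ?enum_uniq //; apply: word_inj.
- exact: permutations_uniq.
have U : uniq [seq word i | i <- enum {perm 'I_n}].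
  by rewrite map_inj_uniq ?enum_uniq //; apply: word_inj.
have S : {subset [seq word i | i <- enum {perm 'I_n}] <= permutations (iota 0 n)}.
  by move=> w /mapP[p _ ->]; rewrite mem_permutations word_perm.
have Sz : size (permutations (iota 0 n)) <= size [seq word i | i <- enum {perm 'I_n}].
  by rewrite size_map -cardE card_Sn size_permutations ?iota_uniq // size_iota.
exact: (uniq_min_size U S Sz).2.
Qed.

Lemma SnkE n k : Snk n k = \sum_(w <- permutations (iota 0 n)) (simw n w && (desr w == k)).
Proof.
rewrite /Snk -card_word; apply: eq_card => p.
by rewrite !inE simsunE /des des_seqE.
Qed.

Lemma PnkE n k : Pnk n k = \sum_(w <- permutations (iota 0 n)) (simw n w && (pkr w == k)).
Proof.
rewrite /Pnk -card_word; apply: eq_card => p.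
by rewrite !inE simsunE /pk pk_seqE.
Qed.

Definition ins (j x : nat) (w : seq nat) := take j w ++ x :: drop j w.

Lemma ins_perm j x w : perm_eq (ins j x w) (x :: w).
Proof.
by rewrite /ins -cat1s perm_catCA /= cat_take_drop.
Qed.

Lemma iotaSr n : perm_eq (iota 0 n.+1) (n :: iota 0 n).
Proof. by rewrite -addn1 iotaD add0n /= cats1 perm_rcons. Qed.

Lemma ins_inj x w w' j j' : x \notin w -> x \notin w' -> j <= size w -> j' <= size w' ->
  ins j x w = ins j' x w' -> j = j' /\ w = w'.
Proof.
move=> hw hw' hj hj' e.
have ix : forall j w, x \notin w -> j <= size w -> index x (ins j x w) = j.
  move=> i v hv hi; rewrite /ins index_cat ifF; last first.
    by apply/negP => /mem_take; apply/negP.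
  by rewrite /= eqxx addn0 size_take_min; apply/minn_idPl.
have ej : j = j' by rewrite -(ix j w) // -(ix j' w') // e.
subst j'; split => //.
have rw : forall v, j <= size v -> v = take j (ins j x v) ++ drop j.+1 (ins j x v).
  move=> v hv; rewrite /ins take_size_cat ?size_take_min ?(minn_idPl hv) //.
  rewrite -cat_rcons drop_size_cat ?size_rcons ?size_take_min ?(minn_idPl hv) //.
  by rewrite cat_take_drop.
by rewrite (rw w) // (rw w') // e.
Qed.

Lemma mem_pairs (s : seq (seq nat)) (t : seq nat) w j : (w,j) \in [seq (x,y) | x <- s, y <- t] -> (w \in s) /\ (j \in t).
Proof. by case/allpairsP => -[v i] [/= hv hi [-> ->]]. Qed.

Lemma perms_ins n : perm_eq (permutations (iota 0 n.+1))
  [seq ins j n w | w <- permutations (iota 0 n), j <- iota 0 n.+1].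
Proof.
apply: uniq_perm; first exact: permutations_uniq.
  apply: allpairs_uniq; [exact: permutations_uniq | exact: iota_uniq |].
  move=> [w j] [w' j'] /mem_pairs [hv hi] /mem_pairs [hv' hi'] /= e.
  move: hv hv' hi hi'; rewrite !mem_permutations !mem_iota !add0n => hv hv' hi hi'.
  have nv : forall u, perm_eq u (iota 0 n) -> n \notin u.
    by move=> u /perm_mem h; rewrite h mem_iota ltnn andbF.
  have sv : forall u, perm_eq u (iota 0 n) -> size u = n.
    by move=> u /perm_size ->; rewrite size_iota.
  have [] := ins_inj (nv _ hv) (nv _ hv') _ _ e.
  - by rewrite sv.
  - by rewrite sv.
  - by move=> -> ->.
move=> t; rewrite mem_permutations; apply/idP/allpairsP => [ht | [[w j] /= [hw hj ->]]].
- have nt : n \in t by rewrite (perm_mem ht n) mem_iota add0n ltnSn.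
  exists (take (index n t) t ++ drop (index n t).+1 t, index n t).
  have et : t = ins (index n t) n (take (index n t) t ++ drop (index n t).+1 t).
    rewrite /ins take_size_cat ?size_take_min ?(minn_idPl _) //; last first.
      by apply: ltnW; rewrite index_mem.
    rewrite drop_size_cat ?size_take_min ?(minn_idPl _) //; last first.
      by apply: ltnW; rewrite index_mem.
    apply: (etrans (esym (cat_take_drop (index n t) t))); congr (_ ++ _).
    by rewrite (drop_nth 0) ?index_mem // nth_index.
  split => //.
  + rewrite mem_permutations -(perm_cons n).
    apply: (perm_trans _ (iotaSr n)); apply: (perm_trans _ ht).
    rewrite [X in perm_eq _ X]et perm_sym; exact: ins_perm.
  + rewrite mem_iota add0n /=.
    have : index n t < size t by rewrite index_mem.
    by rewrite (perm_size ht) size_iota.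
- move: hw; rewrite mem_permutations => hw.
  apply: (perm_trans (ins_perm j n w)); rewrite perm_sym.
  apply: (perm_trans (iotaSr n)); by rewrite perm_cons perm_sym.
Qed.

Lemma sum_ins n (F : seq nat -> nat) :
  \sum_(t <- permutations (iota 0 n.+1)) F t =
  \sum_(w <- permutations (iota 0 n)) \sum_(0 <= j < n.+1) F (ins j n w).
Proof.
rewrite (perm_big _ (perms_ins n)) big_allpairs_dep /=.
by apply: eq_bigr => w _; rewrite /index_iota subn0.
Qed.

Lemma perm_all_lt n w : perm_eq w (iota 0 n) -> all (fun y => y < n) w.
Proof. by move=> h; apply/allP => y; rewrite (perm_mem h y) mem_iota. Qed.

Lemma filter_all_id n w : all (fun y => y < n) w -> [seq y <- w | y < n] = w.
Proof. by move/all_filterP. Qed.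

Lemma simw_ins n j w : perm_eq w (iota 0 n) ->
  simw n.+1 (ins j n w) = simw n w && ~~ ddr (ins j n w).
Proof.
move=> hw; rewrite /simw -(addn1 n.+1) iotaD all_cat.
congr (_ && _); last first.
  rewrite add0n /= andbT filter_all_id //; rewrite (perm_all _ (ins_perm _ _ _)) /= ltnSn /=.
  by apply: sub_all (perm_all_lt hw) => y /ltnW.
apply: eq_in_all => k; rewrite mem_iota add0n ltnS => /andP[_ hk].
by rewrite /ins filter_cat /= ltnNge hk /= -filter_cat cat_take_drop.
Qed.

Lemma simw_ddr n w : perm_eq w (iota 0 n) -> simw n w -> ~~ ddr w.
Proof.
move=> hw /allP /(_ n); rewrite mem_iota add0n ltnSn filter_all_id ?(perm_all_lt hw) //.
by apply.
Qed.

Definition hd_lt a (s : seq nat) : bool := if s is y :: _ then y < a else false.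
Definition dd_head a (s : seq nat) : bool :=
  if s is y :: z :: _ then (y < a) && (z < y) else false.

Lemma desr_cons a s : desr (a :: s) = hd_lt a s + desr s.
Proof. by case: s. Qed.

Lemma ddr_cons a s : ddr (a :: s) = dd_head a s || ddr s.
Proof. by case: s => [|y [|z s]] //=; rewrite orbF. Qed.

Fixpoint jd (j : nat) (w : seq nat) : bool :=
  match j, w with
  | j'.+1, a :: w' => if j' is 0 then hd_lt a w' else jd j' w'
  | _, _ => false
  end.

Lemma ins0 x w : ins 0 x w = x :: w. Proof. by case: w. Qed.
Lemma insS j x a w : ins j.+1 x (a :: w) = a :: ins j x w. Proof. by []. Qed.
Lemma ins_nil j x : ins j x [::] = [:: x]. Proof. by case: j. Qed.

Section Local.
Variable x : nat.

Lemma hd_lt_ins a j w : a < x -> hd_lt a (ins j x w) = (0 < j) && hd_lt a w.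
Proof.
move=> ax; case: j => [|j]; first by rewrite ins0 /= [x < a]ltnNge (ltnW ax).
case: w => [|b w]; rewrite ?ins_nil ?insS //= [x < a]ltnNge (ltnW ax) //.
Qed.

Lemma dd_head_ins a j w : all (fun y => y < x) (a :: w) ->
  dd_head a (ins j x w) = (1 < j) && dd_head a w.
Proof.
move=> /= /andP[ax hw]; case: j => [|[|j]].
- rewrite ins0 /dd_head; case: w hw => [|b w] //= _.
  by rewrite [x < a]ltnNge (ltnW ax).
- case: w hw => [|b w]; rewrite ?ins_nil ?insS ?ins0 //= => /andP[bx _].
  by rewrite [x < b]ltnNge (ltnW bx) andbF.
- case: w hw => [|b [|c w]]; rewrite ?ins_nil ?insS ?ins0 ?ins_nil //= => /andP[bx _].
  by rewrite [x < b]ltnNge (ltnW bx) andbF.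
Qed.

Lemma sd_ins j w : all (fun y => y < x) w ->
  sd (ins j x w) = if j == 0 then w != [::] else (1 < j) && sd w.
Proof.
case: j => [|[|j]].
- by case: w => [|b w]; rewrite ?ins0 //= => /andP[->].
- case: w => [|b w]; rewrite ?ins_nil ?insS ?ins0 //= => /andP[bx _].
  by rewrite ltnNge (ltnW bx).
- case: w => [|b [|c w]]; rewrite ?ins_nil ?insS ?ins0 ?ins_nil //= => /andP[bx _].
  by rewrite ltnNge (ltnW bx).
Qed.

Lemma ddr_ins j w : all (fun y => y < x) w -> ~~ ddr w ->
  ddr (ins j x w) = sd (drop j w).
Proof.
elim: w j => [|a w IH] j; first by rewrite ins_nil; case: j.
move=> hw; rewrite ddr_cons negb_or => /andP[nh nd].
case: j => [|j].
- rewrite ins0 ddr_cons [ddr (a :: w)]ddr_cons (negbTE nh) (negbTE nd) orbF drop0.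
  by case: w {IH nd nh} hw => [|b w] //= /andP[-> _]; rewrite orbF.
- rewrite insS ddr_cons IH //; last by case/andP: hw.
  by rewrite dd_head_ins // (negbTE nh) andbF.
Qed.

Lemma desr_ins j w : all (fun y => y < x) w ->
  desr (ins j x w) + jd j w = desr w + (j < size w).
Proof.
elim: w j => [|a w IH] j; first by rewrite ins_nil; case: j.
move=> hw0; have /andP[ax hw] := hw0; case: j => [|j].
- by rewrite ins0 desr_cons /= ax addn0 add1n addnC.
- rewrite insS desr_cons hd_lt_ins // [desr (a :: w)]desr_cons.
  case: j => [|j].
  + by have := IH 0 hw; rewrite /= => h; lia.
  + by have := IH j.+1 hw; rewrite /= => h; lia.
Qed.

End Local.

Lemma sum_sd_drop w : \sum_(0 <= j < (size w).+1) sd (drop j w) = desr w.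
Proof.
elim: w => [|a w IH]; first by rewrite big_nat1.
rewrite big_nat_recl // desr_cons -IH drop0; congr (_ + _); by case: w {IH}.
Qed.

Lemma jd0 w : jd 0 w = false. Proof. by case: w. Qed.

Lemma sum_jd w : \sum_(0 <= j < (size w).+1) jd j w = desr w.
Proof.
elim: w => [|a w IH]; first by rewrite big_nat1.
rewrite big_nat_recl // jd0 add0n desr_cons -IH.
change (size (a :: w)) with (size w).+1.
by rewrite big_nat_recl // [in RHS]big_nat_recl // jd0 add0n.
Qed.

Lemma jd_lt j w : jd j w -> j < size w.
Proof.
elim: w j => [|a w IH] [|[|j]] //; first by case: w {IH}.
by move=> h; apply: (IH j.+1 h).
Qed.

Lemma sd_drop_lt j w : sd (drop j w) -> j < size w.
Proof.
elim: w j => [|a w IH] [|j] //=; by move/IH.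
Qed.

Lemma jd_excl j w : ~~ ddr w -> jd j w -> ~~ sd (drop j w).
Proof.
elim: w j => [|a w IH] [|[|j]] //.
- rewrite ddr_cons negb_or => /andP[nh _]; move: nh.
  by case: w {IH} => [|b [|c w]] //= /negP h hb; apply/negP => hc; apply: h; rewrite hb.
- by rewrite ddr_cons negb_or => /andP[_ /IH h] hj; exact: (h j.+1 hj).
Qed.

Lemma sum_lt n : \sum_(0 <= j < n.+1) (j < n) = n.
Proof.
rewrite big_nat_recr //= ltnn addn0.
rewrite (eq_big_nat _ _ (F2 := fun _ => 1)); last by move=> i /andP[_ ->].
by rewrite sum_nat_const_nat subn0 muln1.
Qed.

Lemma sum_ge n : \sum_(0 <= j < n.+1) ~~ (j < n) = 1.
Proof.
rewrite big_nat_recr //= ltnn big1_seq // => i /=.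
by rewrite mem_index_iota => /andP[_ ->].
Qed.

Lemma sloc x w D : all (fun y => y < x) w -> ~~ ddr w ->
  \sum_(0 <= j < (size w).+1) (~~ ddr (ins j x w) && (desr (ins j x w) == D)) =
  (D == desr w) * (desr w).+1 + (D == (desr w).+1) * (size w - (desr w).*2).
Proof.
move=> hw hd.
have E : forall j, j < (size w).+1 ->
  nat_of_bool (~~ ddr (ins j x w) && (desr (ins j x w) == D)) =
  (D == desr w) * (~~ (j < size w) + jd j w) +
  (D == (desr w).+1) * [&& j < size w, ~~ jd j w & ~~ sd (drop j w)].
  move=> j _; rewrite ddr_ins //.
  move: (desr_ins j hw) (@jd_lt j w) (@sd_drop_lt j w) (@jd_excl j w hd); lia.
rewrite (eq_big_nat _ _ (fun j hj => E j (andP hj).2)) big_split /= -!big_distrr /=.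
rewrite big_split /= sum_ge sum_jd.
have T : \sum_(0 <= j < (size w).+1) [&& j < size w, ~~ jd j w & ~~ sd (drop j w)]
   + desr w + desr w = size w.
  rewrite -{1}sum_jd -sum_sd_drop -!big_split /=.
  rewrite -[in RHS](sum_lt (size w)).
  apply: eq_big_nat => j _.
  move: (@jd_lt j w) (@sd_drop_lt j w) (@jd_excl j w hd); lia.
have -> : \sum_(0 <= j < (size w).+1) [&& j < size w, ~~ jd j w & ~~ sd (drop j w)]
   = size w - (desr w).*2 by lia.
by rewrite add1n.
Qed.

Lemma jd1 w : jd 1 w = sd w. Proof. by case: w => [|a [|b w]]. Qed.

Lemma bloc x w D : all (fun y => y < x) w -> ~~ ddr w -> 0 < size w ->
  \sum_(0 <= j < (size w).+1) [&& ~~ ddr (ins j x w), desr (ins j x w) == D & sd (ins j x w)] =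
  if sd w then (D == desr w) * desr w + (D == (desr w).+1) * (size w - (desr w).*2)
  else (D == (desr w).+1).
Proof.
move=> hw hd hn.
have Sl := sloc D hw hd.
have i0 := desr_ins 0 hw; have i1 := desr_ins 1 hw.
have d0 := ddr_ins 0 hw hd; have d1 := ddr_ins 1 hw hd.
have e1 := @jd_excl 1 w hd; rewrite jd1 in i1 e1.
have s0 := sd_ins 0 hw; have s1 := sd_ins 1 hw.
rewrite jd0 drop0 in i0 d0.
have hs : sd w -> 1 < size w by case: (w) => [|a [|b v]].
move: Sl; case Es: (size w) hn hs i0 i1 => [|m] // _ hs i0 i1 Sl.
rewrite big_nat_recl // big_nat_recl // in Sl.
rewrite big_nat_recl // big_nat_recl //.
have E2 : forall i, 0 <= i < m ->
   nat_of_bool [&& ~~ ddr (ins i.+2 x w), desr (ins i.+2 x w) == D & sd (ins i.+2 x w)] =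
   sd w * nat_of_bool (~~ ddr (ins i.+2 x w) && (desr (ins i.+2 x w) == D)).
  by move=> i _; rewrite sd_ins //=; case: (sd w); rewrite ?andbT ?andbF ?mul1n ?mul0n.
rewrite (eq_big_nat _ _ E2) -big_distrr /=.
move: Sl; rewrite d0 d1 s0 s1 /=.
have -> : w != [::] by case: (w) Es.
case: (boolP (sd w)) => hsw.
- move: (e1 hsw) i0 i1 (hs hsw) => e1' i0 i1 hs'.
  rewrite (negbTE e1') /=. lia.
- lia.
Qed.

Definition Sc n D := \sum_(w <- permutations (iota 0 n)) (simw n w && (desr w == D)).
Definition Bc n D := \sum_(w <- permutations (iota 0 n)) [&& simw n w, desr w == D & sd w].
Definition Ac n D := \sum_(w <- permutations (iota 0 n)) [&& simw n w, desr w == D & ~~ sd w].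
Definition Pc n D := \sum_(w <- permutations (iota 0 n)) (simw n w && (pkr w == D)).

Lemma SAB n D : Sc n D = Ac n D + Bc n D.
Proof.
rewrite /Sc /Ac /Bc -big_split /=; apply: eq_bigr => w _.
by case: (simw n w); case: (desr w == D); case: (sd w).
Qed.

Lemma inner_S n w D : perm_eq w (iota 0 n) ->
  \sum_(0 <= j < n.+1) (simw n.+1 (ins j n w) && (desr (ins j n w) == D)) =
  simw n w * ((D == desr w) * (desr w).+1 + (D == (desr w).+1) * (n - (desr w).*2)).
Proof.
move=> hw.
rewrite (eq_big_nat _ _ (F2 := fun j => simw n w * (~~ ddr (ins j n w) && (desr (ins j n w) == D))));
  last by move=> j _; rewrite simw_ins //; case: (simw n w); rewrite ?mul1n ?mul0n.
rewrite -big_distrr /=; case: (boolP (simw n w)) => hs //.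
have sz : size w = n by rewrite (perm_size hw) size_iota.
have := sloc D (perm_all_lt hw) (simw_ddr hw hs); rewrite sz => ->.
by rewrite /= !mul1n.
Qed.

Lemma inner_B n w D : 0 < n -> perm_eq w (iota 0 n) ->
  \sum_(0 <= j < n.+1) [&& simw n.+1 (ins j n w), desr (ins j n w) == D & sd (ins j n w)] =
  simw n w * (if sd w then (D == desr w) * desr w + (D == (desr w).+1) * (n - (desr w).*2)
              else (D == (desr w).+1)).
Proof.
move=> hn hw.
rewrite (eq_big_nat _ _ (F2 := fun j => simw n w *
   [&& ~~ ddr (ins j n w), (desr (ins j n w) == D) & sd (ins j n w)]));
  last by move=> j _; rewrite simw_ins //; case: (simw n w); rewrite ?mul1n ?mul0n.
rewrite -big_distrr /=; case: (boolP (simw n w)) => hs //.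
have sz : size w = n by rewrite (perm_size hw) size_iota.
have := bloc D (perm_all_lt hw) (simw_ddr hw hs); rewrite sz => ->; last by [].
by rewrite /= !mul1n.
Qed.

Lemma Srec n D : Sc n.+1 D = D.+1 * Sc n D + (if D is D'.+1 then (n - D'.*2) * Sc n D' else 0).
Proof.
rewrite /Sc sum_ins.
rewrite (eq_big_seq (fun w => simw n w * ((D == desr w) * (desr w).+1 + (D == (desr w).+1) * (n - (desr w).*2)))); last first.
  by move=> w; rewrite mem_permutations => hw; exact: inner_S.
case: D => [|D].
- rewrite big_distrr addn0 /=; apply: eq_bigr => w _.
  case: (simw n w); case: (desr w) => [|d] //=; lia.
- rewrite !big_distrr -big_split /=; apply: eq_bigr => w _.
  case: (simw n w) => /=; lia.
Qed.

Lemma Brec n D : 0 < n -> Bc n.+1 D = D * Bc n D +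
   (if D is D'.+1 then (n - D'.*2) * Bc n D' + Ac n D' else 0).
Proof.
move=> hn; rewrite /Bc /Ac sum_ins.
rewrite (eq_big_seq (fun w => simw n w * (if sd w then (D == desr w) * desr w + (D == (desr w).+1) * (n - (desr w).*2)
              else (D == (desr w).+1)))); last first.
  by move=> w; rewrite mem_permutations => hw; exact: inner_B.
case: D => [|D].
- rewrite big1 // => w _; case: (simw n w) (sd w) => [] [] //=; lia.
- rewrite !big_distrr -!big_split /=; apply: eq_bigr => w _.
  case: (simw n w) (sd w) => [] [] /=; lia.
Qed.

Lemma pkr_des w : uniq w -> ~~ ddr w -> pkr w + sd w = desr w.
Proof.
elim: w => [|a w IH] //.
case: w IH => [|b w] IH //=.
case: w IH => [|c w] IH //=.
  by rewrite addnC.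
move=> /andP[na /andP[nb uw]] /norP[nd ndr].
have := IH; rewrite /= nb uw => /(_ isT ndr).
move: na nb nd; rewrite !inE !negb_or => /andP[ab _] /andP[bc _] nd.
lia.
Qed.

Lemma Prel n k : Pc n k + Bc n k = Sc n k + Bc n k.+1.
Proof.
rewrite /Pc /Bc /Sc -!big_split /=; apply: eq_big_seq => w.
rewrite mem_permutations => hw.
case: (boolP (simw n w)) => hs //=.
have uw : uniq w by rewrite (perm_uniq hw) iota_uniq.
have := pkr_des uw (simw_ddr hw hs).
lia.
Qed.

Lemma des_bound n w : size w <= n -> ~~ ddr w -> (desr w).*2 <= size w.
Proof.
elim: n w => [|n IH] w; first by case: w.
case: w => [|a [|b s]] // hs.
rewrite ddr_cons negb_or => /andP[nh nd].
have nds : ~~ ddr s by move: nd; rewrite ddr_cons negb_or => /andP[].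
rewrite desr_cons.
have hsn : size (b :: s) <= n by [].
case: (ltnP b a) => ba.
- have hb : hd_lt b s = false.
    by move: nh; case: s {nd nds hs hsn} => [|c s] //=; rewrite ba /=; case: (c < b).
  rewrite desr_cons hb add0n /= ba.
  have h1 : size s <= n by apply: leq_trans hsn; rewrite /= ltnW.
  have := IH s h1 nds; lia.
- have := IH (b :: s) hsn nd; rewrite /= [b < a]ltnNge ba /=; lia.
Qed.

Lemma Sc_vanish n k : n < k.*2 -> Sc n k = 0.
Proof.
move=> hk; rewrite /Sc big1_seq // => w /andP[_]; rewrite mem_permutations => hw.
case: (boolP (simw n w)) => hs //=; apply/eqP; rewrite eqb0; apply/eqP => e.
have := des_bound (leqnn (size w)) (simw_ddr hw hs).
rewrite (perm_size hw) size_iota e; lia.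
Qed.

Lemma perm1 : permutations (iota 0 1) = [:: [:: 0]].
Proof. by []. Qed.

Lemma perm0 : permutations (iota 0 0) = [:: [::]].
Proof. by []. Qed.

Lemma closed m : forall k, Ac m.+1 k = k.+1 * Sc m k /\
  Bc m.+1 k = (if k is k'.+1 then (m - k'.*2) * Sc m k' else 0).
Proof.
elim: m => [|m IH] k.
  rewrite /Ac /Bc /Sc perm1 perm0 !big_cons !big_nil /=.
  by case: k => [|k] /=; rewrite ?mul0n; lia.
have hm : 0 < m.+1 by [].
have ES := Srec m.
have EB := Brec k hm.
have BA : Bc m.+2 k = if k is k'.+1 then (m.+1 - k'.*2) * Sc m.+1 k' else 0.
  rewrite EB; case: k {EB} => [|k]; first by rewrite mul0n.
  have [a1 b1] := IH k.+1; have [a0 b0] := IH k.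
  rewrite b1 a0 b0 (ES k).
  case: k {a1 b1 a0 b0} => [|k].
  - rewrite /=; case: (ltnP m 0) => // _; lia.
  - case: (ltnP m (k.+1).*2) => h.
    + rewrite (Sc_vanish h); lia.
    + have [r ->] : exists r, m = r + (k.+1).*2 by exists (m - (k.+1).*2); rewrite subnK.
      have e1 : r + k.+1.*2 - k.+1.*2 = r by rewrite addnK.
      have e2 : (r + k.+1.*2).+1 - k.+1.*2 = r.+1 by rewrite -addSn addnK.
      have e3 : r + k.+1.*2 - k.*2 = r.+2 by lia.
      rewrite e1 e2 e3; lia.
split => //.
have := SAB m.+2 k; rewrite BA (Srec m.+1 k).
case: k {EB BA} => [|k]; lia.
Qed.

Lemma P1 n k : Pc n.+1 k = (n.+1 - k) * Sc n k.
Proof.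
have E := Prel n.+1 k.
have [_ b0] := closed n k; have [_ b1] := closed n k.+1.
rewrite b0 b1 (Srec n k) in E; clear b0 b1.
case: (ltnP n k.*2) => h.
  rewrite (Sc_vanish h) in E *.
  case: k h E => [|k] h E; last by move: E; rewrite /=; lia.
  by move: E => /=; lia.
have [r er] : exists r, n = r + k.*2 by exists (n - k.*2); rewrite subnK.
case: k h E er => [|k] h E er.
  move: E; rewrite /= => E; lia.
move: E; rewrite /= => E.
have e1 : n - k.+1.*2 = r by rewrite er addnK.
have e2 : n.+1 - k.+1 = r + k.+2 by rewrite er; lia.
rewrite e1 e2 in E *.
lia.
Qed.

Lemma S0 n : Sc n 0 = 1.
Proof.
elim: n => [|n IH]; first by rewrite /Sc perm0 big_cons big_nil.
by rewrite Srec IH.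
Qed.

Lemma S1 n : Sc n 1 = 2 ^ n - n.+1.
Proof.
elim: n => [|n IH]; first by rewrite /Sc perm0 big_cons big_nil.
rewrite Srec IH S0 expnS.
have := @ltn_expl 2 n isT; lia.
Qed.

Lemma part1 n k : Pnk n.+1 k = ((n.+1 - k) * Snk n k)%N.
Proof. by rewrite PnkE SnkE -/(Pc _ _) -/(Sc _ _) P1. Qed.

Lemma SnkSc n k : Snk n k = Sc n k. Proof. by rewrite SnkE. Qed.

Lemma divE (a b c : nat) : b != 0%N -> (a%:R / b%:R * (b * c)%N%:R : rat)%R = (a * c)%N%:R%R.
Proof.
move=> hb; rewrite natrM GRing.mulrA GRing.divfK ?natrM // pnatr_eq0 //.
Qed.

Local Open Scope ring_scope.

Theorem theorem6 :
  (forall n k : nat, (1 <= n)%N -> Pnk n.+1 k = ((n.+1 - k) * Snk n k)%N) /\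
  (forall n : nat, (1 <= n)%N ->
     Ppoly n.+1 = (n.+1)%:R *: Spoly n - 'X * (Spoly n)^`()) /\
  (forall n k : nat, (1 <= n)%N -> (k <= n./2)%N ->
     ((Pnk n.+1 k)%:R : rat) =
       ((k.+1 * (n - k).+1)%N)%:R / (n - k)%:R * (Pnk n k)%:R
       + ((n - k.*2).+1)%:R * (Pprev n k)%:R) /\
  (forall n : nat, (1 <= n)%N ->
     Pnk n 0 = n /\ Pnk n 1 = ((n - 1) * (2 ^ (n - 1) - n))%N).
Proof.
split; first by move=> n k _; exact: part1.
split.
  move=> n _; apply/polyP => i.
  rewrite coefB coefZ coefXM coef_deriv !coef_poly.
  case: i => [|j]; first by rewrite part1 subn0 /= subr0 natrM.
  rewrite /= part1.
  case: (ltnP j.+1 n.+1) => h.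
    rewrite (_ : (j.+1 < n.+2)%N = true); last by lia.
    by rewrite natrM natrB ?mulrBl ?[j.+1%:R * _]mulr_natl //; apply: ltnW.
  rewrite mulr0 mul0rn subrr; case: ifP => // h2.
  have -> : j.+1 = n.+1 by lia.
  by rewrite subnn mul0n.
split.
  move=> [|m] k // _ hk.
  rewrite !part1 /Pprev.
  have hk2 : (k.*2 <= m.+1)%N by move: hk; rewrite -leq_double halfK; lia.
  case: k hk hk2 => [|k] hk hk2.
    rewrite /= mulr0 addr0 divE //; congr (_%:R); rewrite !SnkSc (Srec m 0) S0 /=; lia.
  rewrite /= part1 divE; last by lia.
  rewrite -natrM -natrD; congr (_%:R).
  rewrite !SnkSc (Srec m k.+1).
  have [r er] : exists r, m.+1 = (r + k.+1.*2)%N by exists (m.+1 - k.+1.*2)%N; rewrite subnK.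
  have e1 : (m - k.*2 = r.+1)%N by lia.
  have e2 : (m.+2 - k.+1 = r + k.+2)%N by lia.
  have e3 : ((m.+1 - k.+1).+1 = r + k.+2)%N by lia.
  have e4 : ((m.+1 - k.+1.*2).+1 = r.+1)%N by lia.
  have e5 : (m.+1 - k = r + k.+2)%N by lia.
  rewrite e1 e2 e3 e4 e5; lia.
move=> [|m] // _; rewrite !part1 !SnkSc S0 S1 /= subn0 subn1 /=; split; lia.
Qed.
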